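(* $\frac{\partial^2}{\partial y^2}\zeta(3,z)\ge 4>0$ for all $z=x+iy$ with $x\in\mathbb{R}$ and $y\in[\frac{\sqrt3}{2},\infty)$.
   Context: For $s>1$ and $z=x+iy$ with $y>0$, $\zeta(s,z)=\sum_{(m,n)\in\mathbb{Z}^2\setminus\{0\}}\frac{y^s}{|mz+n|^{2s}}$. *)

(* Defs.v *)
From Stdlib Require Import Reals ZArith Lra.
From Coquelicot Require Import Coquelicot.
Open Scope R_scope.

(* Sum of a family indexed by Z (used only for nonnegative families, where
   the order of summation is irrelevant):
   sum_{k >= 0} f k + sum_{k >= 1} f (-k). *)
Definition Zsum (f : Z -> R) : R :=
  Series (fun k : nat => f (Z.of_nat k)) +
  Series (fun k : nat => f (- Z.of_nat (S k))%Z).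

(* The summand y^s / |m z + n|^(2s) for z = x + i y, with the term (0,0) excluded.
   |m z + n|^2 = (m x + n)^2 + (m y)^2. *)
Definition zeta_term (s x y : R) (m n : Z) : R :=
  if (Z.eqb m 0 && Z.eqb n 0)%bool then 0
  else Rpower y s /
       Rpower ((IZR m * x + IZR n) ^ 2 + (IZR m * y) ^ 2) s.

(* Epstein-type zeta function
   zeta(s, z) = sum_{(m,n) in Z^2 \ {0}} y^s / |m z + n|^(2s),  z = x + i y, y > 0,
   written as the iterated sum over m then n (terms are nonnegative). *)
Definition zeta (s x y : R) : R :=
  Zsum (fun m => Zsum (fun n => zeta_term s x y m n)).

(* Main.v *)
Require Import Defs.
From Stdlib Require Import Reals ZArith Lra Lia.
From Coquelicot Require Import Coquelicot.
Open Scope R_scope.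

Lemma tele_sum (p:R) N : 0<p -> sum_n (fun k => / (INR k + p) - / (INR k + 1 + p)) N = /p - / (INR N + 1 + p).
Proof. intros Hp. induction N.
 - rewrite sum_O. simpl. f_equal. f_equal. lra.
 - rewrite sum_Sn, IHN. rewrite S_INR. unfold plus; simpl. ring. Qed.

Lemma tele (p:R) : 0<p -> is_series (fun k => / (INR k + p) - / (INR k + 1 + p)) (/p).
Proof. intros Hp. 
 assert (H: is_lim_seq (sum_n (fun k => / (INR k + p) - / (INR k + 1 + p))) (/p)).
 2: exact H.
 apply (is_lim_seq_ext (fun N => /p - / (INR N + 1 + p))).
 intros; rewrite tele_sum; auto.
 assert (H0: is_lim_seq (fun N => / (INR N+1+p)) 0).
 { replace (Finite 0) with (Rbar_inv p_infty) by reflexivity.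
 apply is_lim_seq_inv. 2: discriminate.
 apply is_lim_seq_plus with p_infty p. 
 apply is_lim_seq_plus with p_infty 1. apply is_lim_seq_INR. apply is_lim_seq_const. reflexivity.
 apply is_lim_seq_const. reflexivity. }
 generalize (is_lim_seq_minus' _ _ _ _ (is_lim_seq_const (/p)) H0). rewrite Rminus_0_r. auto.
Qed.

Lemma ex_le (a b : nat -> R) : (forall n, Rabs (a n) <= b n) -> ex_series b -> ex_series a.
Proof. intros H Hb. apply (ex_series_le a b); auto. Qed.

Lemma ex_tele (a : nat -> R) (C p : R) : 0 < p ->
  (forall k, Rabs (a k) <= C * (/ (INR k + p) - / (INR k + 1 + p))) -> ex_series a.
Proof. intros Hp H. apply (ex_le a _ H). apply (ex_series_scal_l C (fun k => / (INR k + p) - / (INR k + 1 + p))). exists (/p). apply tele; auto. Qed.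

Lemma Series_tele_le (a : nat -> R) (C p : R) : 0 < p ->
  (forall k, 0 <= a k <= C * (/ (INR k + p) - / (INR k + 1 + p))) -> Series a <= C / p.
Proof. intros Hp H. eapply Rle_trans. apply Series_le. exact H.
 apply (ex_series_scal_l C (fun k => / (INR k + p) - / (INR k + 1 + p))). exists (/p). apply tele; auto.
 rewrite Series_scal_l. rewrite (is_series_unique _ (/p)). unfold Rdiv; lra. apply tele; auto. Qed.

Lemma Series_ge_0 (a : nat -> R) : (forall n, 0 <= a n) -> 0 <= Series a.
Proof. intros H. unfold Series. 
 assert (Rbar_le 0 (Lim_seq (sum_n a))).
 { replace (Finite 0) with (Lim_seq (fun _ => 0)). apply Lim_seq_le_loc.
   exists O. intros N _. induction N. rewrite sum_O; auto.
   rewrite sum_Sn. unfold plus; simpl. specialize (H (S N)). lra. apply Lim_seq_const. }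
 destruct (Lim_seq (sum_n a)); simpl in *; lra. Qed.

Lemma exR_minus (a b : nat -> R) : ex_series a -> ex_series b -> ex_series (fun n => a n - b n).
Proof. intros Ha Hb. exact (ex_series_minus (K:=R_AbsRing) (V:=R_NormedModule) a b Ha Hb). Qed.

Lemma exR_scal (c : R) (a : nat -> R) : ex_series a -> ex_series (fun n => c * a n).
Proof. intros Ha. exact (ex_series_scal_l (K:=R_AbsRing) (V:=R_NormedModule) c a Ha). Qed.

Lemma Series_le_gen (a b : nat -> R) : ex_series a -> ex_series b -> (forall n, a n <= b n) -> Series a <= Series b.
Proof. intros Ha Hb H.
 assert (E: ex_series (fun n => b n - a n)).
 { apply exR_minus; auto. }
 assert (0 <= Series (fun n => b n - a n)).
 { apply Series_ge_0. intros n; specialize (H n); lra. }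
 rewrite Series_minus in H0; auto. lra. Qed.

Lemma Series_abs_le (a b : nat -> R) : (forall n, Rabs (a n) <= b n) -> ex_series b -> Rabs (Series a) <= Series b.
Proof. intros H Hb. eapply Rle_trans. apply Series_Rabs.
 apply (ex_le _ b). intros; rewrite Rabs_Rabsolu; auto. auto.
 apply Series_le; auto. intros; split; auto. apply Rabs_pos. Qed.

Lemma Series_ge_first (a : nat -> R) : (forall n, 0 <= a n) -> ex_series a -> a O <= Series a.
Proof. intros H E. rewrite Series_incr_1; auto. assert (0 <= Series (fun k => a (S k))).
 apply Series_ge_0; auto. lra. Qed.

Definition Zex (f : Z -> R) := ex_series (fun k => f (Z.of_nat k)) /\ ex_series (fun k => f (- Z.of_nat (S k))%Z).

Lemma Zsum_ext f g : (forall n, f n = g n) -> Zsum f = Zsum g.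
Proof. intros H; unfold Zsum. f_equal; apply Series_ext; auto. Qed.

Lemma Zex_ext f g : (forall n, f n = g n) -> Zex f -> Zex g.
Proof. intros H [H1 H2]; split.
 apply (ex_series_ext (fun k => f (Z.of_nat k))); auto.
 apply (ex_series_ext (fun k => f (- Z.of_nat (S k))%Z)); auto. Qed.

Lemma Zex_le f g : (forall n, Rabs (f n) <= g n) -> Zex g -> Zex f.
Proof. intros H [H1 H2]; split.
 apply (ex_le _ (fun k => g (Z.of_nat k))); auto.
 apply (ex_le _ (fun k => g (- Z.of_nat (S k))%Z)); auto. Qed.

Lemma Zsum_abs_le f g : (forall n, Rabs (f n) <= g n) -> Zex g -> Rabs (Zsum f) <= Zsum g.
Proof. intros H [H1 H2]. unfold Zsum. eapply Rle_trans. apply Rabs_triang.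
 apply Rplus_le_compat; apply Series_abs_le; auto. Qed.

Lemma Zsum_le f g : Zex f -> Zex g -> (forall n, f n <= g n) -> Zsum f <= Zsum g.
Proof. intros [H1 H2] [H3 H4] H. unfold Zsum. apply Rplus_le_compat; apply Series_le_gen; auto. Qed.

Lemma Zex_scal c f : Zex f -> Zex (fun n => c * f n).
Proof. intros [H1 H2]; split; apply exR_scal; auto. Qed.

Lemma Zsum_scal c f : Zsum (fun n => c * f n) = c * Zsum f.
Proof. unfold Zsum. rewrite !Series_scal_l. ring. Qed.

Lemma Zex_comb f g k h : Zex f -> Zex g -> Zex k ->
  Zex (fun n => f n - g n - h * k n) /\ Zsum (fun n => f n - g n - h * k n) = Zsum f - Zsum g - h * Zsum k.
Proof. intros [F1 F2] [G1 G2] [K1 K2].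
 assert (S1 : forall (a b c : nat -> R), ex_series a -> ex_series b -> ex_series c ->
   ex_series (fun n => a n - b n - h * c n) /\ Series (fun n => a n - b n - h * c n) = Series a - Series b - h * Series c).
 { intros a b c Ha Hb Hc.
   assert (Eab : ex_series (fun n => a n - b n)).
   { apply exR_minus; auto. }
   assert (Ec : ex_series (fun n => h * c n)). apply exR_scal; auto.
   split. apply exR_minus; auto.
   rewrite Series_minus; auto. rewrite Series_minus; auto. rewrite Series_scal_l. ring. }
 destruct (S1 _ _ _ F1 G1 K1) as [A1 B1]. destruct (S1 _ _ _ F2 G2 K2) as [A2 B2].
 split. split; auto. unfold Zsum. rewrite B1, B2. ring. Qed.

Definition w1 (n:Z) : R := / (1 + IZR n ^ 2).

Lemma w1_pos n : 0 < w1 n.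
Proof. unfold w1. apply Rinv_0_lt_compat. generalize (pow2_ge_0 (IZR n)); lra. Qed.

Lemma w1_nat_bound (r : R) (k : nat) : (INR k)^2 <= r^2 -> / (1 + r^2) <= 4 * (/ (INR k + 1) - / (INR k + 1 + 1)).
Proof. intros H. assert (0 <= INR k) by apply pos_INR.
 replace (/ (INR k + 1) - / (INR k + 1 + 1)) with (/ ((INR k + 1) * (INR k + 2))) by (field; lra).
 apply Rle_trans with (/ (1 + INR k ^2)). apply Rinv_le_contravar. nra. lra.
 replace (4 * / ((INR k + 1) * (INR k + 2))) with (/ (((INR k + 1) * (INR k + 2))/4)) by (field; lra).
 apply Rinv_le_contravar. nra. nra. Qed.

Lemma Zex_w1 : Zex w1.
Proof. split.
 - apply (ex_tele _ 4 1). lra. intros k. unfold w1. rewrite Rabs_pos_eq.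
   apply w1_nat_bound. rewrite <- INR_IZR_INZ. lra.
   left; apply Rinv_0_lt_compat. generalize (pow2_ge_0 (IZR (Z.of_nat k))); lra.
 - apply (ex_tele _ 4 1). lra. intros k. unfold w1. rewrite Rabs_pos_eq.
   apply w1_nat_bound. rewrite opp_IZR, <- INR_IZR_INZ, S_INR. assert (0 <= INR k) by apply pos_INR. nra.
   left; apply Rinv_0_lt_compat. generalize (pow2_ge_0 (IZR (- Z.of_nat (S k)))); lra. Qed.

Definition Zw := Zsum w1.

Lemma taylor_derive F D t δ L : 0 < δ -> 0 <= L ->
  (forall u, Rabs (u-t) < δ -> Rabs (F u - F t - (u-t)*D) <= L*(u-t)^2) -> is_derive F t D.
Proof. intros Hd HL H. apply is_derive_Reals. intros eps Heps.
 assert (Hp : 0 < Rmin δ (eps/(L+1))). apply Rmin_pos; auto. apply Rdiv_lt_0_compat; lra.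
 exists (mkposreal _ Hp). intros h Hh Hhd. simpl in Hhd.
 assert (Hh1 : Rabs h < δ). eapply Rlt_le_trans. exact Hhd. apply Rmin_l.
 assert (Hh2 : Rabs h < eps/(L+1)). eapply Rlt_le_trans. exact Hhd. apply Rmin_r.
 specialize (H (t+h)). replace (t+h-t) with h in H by ring. specialize (H Hh1).
 replace ((F (t+h) - F t)/h - D) with ((F (t+h) - F t - h*D)/h) by (field; auto).
 unfold Rdiv. rewrite Rabs_mult, Rabs_inv.
 assert (0 < Rabs h) by (apply Rabs_pos_lt; auto).
 apply Rle_lt_trans with (L * h^2 * / Rabs h).
 apply Rmult_le_compat_r. left; apply Rinv_0_lt_compat; auto. auto.
 replace (L * h^2 * / Rabs h) with (L * Rabs h).
 apply Rle_lt_trans with (L * (eps/(L+1))). apply Rmult_le_compat_l; lra.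
 replace (L * (eps/(L+1))) with (eps * (L/(L+1))) by (field; lra).
 assert (L/(L+1) < 1). apply Rmult_lt_reg_r with (L+1). lra. unfold Rdiv. rewrite Rmult_assoc, Rinv_l; lra.
 nra.
 replace (h^2) with (Rabs h * Rabs h). field. lra.
 rewrite <- Rabs_mult. rewrite Rabs_pos_eq. ring. nra. Qed.

Lemma Zsum_taylor (f g : Z -> R -> R) (L : Z -> R) t u :
  (forall k, Rabs (f k u - f k t - (u-t) * g k t) <= L k * (u-t)^2) ->
  Zex L -> Zex (fun k => f k u) -> Zex (fun k => f k t) -> Zex (fun k => g k t) ->
  Rabs (Zsum (fun k => f k u) - Zsum (fun k => f k t) - (u-t) * Zsum (fun k => g k t)) <= Zsum L * (u-t)^2.
Proof. intros H HL H1 H2 H3. destruct (Zex_comb _ _ _ (u-t) H1 H2 H3) as [E1 E2].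
 rewrite <- E2. rewrite (Rmult_comm (Zsum L)), <- Zsum_scal.
 apply Zsum_abs_le. intros k. rewrite (Rmult_comm ((u-t)^2)). apply H. apply Zex_scal; auto. Qed.

Lemma nested (f g: Z -> Z -> R -> R) t δ C C1 C2 : 0 < δ -> 0 <= C ->
 (forall m n u, Rabs (u-t) < δ -> Rabs (f m n u - f m n t - (u-t) * g m n t) <= C * (w1 m * w1 n) * (u-t)^2) ->
 (forall m n u, Rabs (u-t) < δ -> Rabs (f m n u) <= C1 * (w1 m * w1 n)) ->
 (forall m n, Rabs (g m n t) <= C2 * (w1 m * w1 n)) ->
 is_derive (fun u => Zsum (fun m => Zsum (fun n => f m n u))) t (Zsum (fun m => Zsum (fun n => g m n t))).
Proof. intros Hd HC H H1 H2.
 assert (Ew : forall c m, Zex (fun n => c * (w1 m * w1 n))).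
 { intros c m. apply (Zex_ext (fun n => (c * w1 m) * w1 n)). intros; ring. apply Zex_scal, Zex_w1. }
 assert (Sw : forall c m, Zsum (fun n => c * (w1 m * w1 n)) = (c * Zw) * w1 m).
 { intros c m. rewrite (Zsum_ext _ (fun n => (c * w1 m) * w1 n)). rewrite Zsum_scal. unfold Zw; ring. intros; ring. }
 assert (Ew2 : forall c, Zex (fun m => c * w1 m)). intros; apply Zex_scal, Zex_w1.
 assert (Bf : forall m u, Rabs (u-t) < δ -> Rabs (Zsum (fun n => f m n u)) <= (C1 * Zw) * w1 m).
 { intros m u Hu. rewrite <- Sw. apply Zsum_abs_le. intros; apply H1; auto. apply Ew. }
 assert (Bg : forall m, Rabs (Zsum (fun n => g m n t)) <= (C2 * Zw) * w1 m).
 { intros m. rewrite <- Sw. apply Zsum_abs_le. intros; apply H2; auto. apply Ew. }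
 assert (Ht0 : Rabs (t - t) < δ). rewrite Rminus_diag, Rabs_R0; auto.
 apply taylor_derive with δ (C * Zw * Zw); auto.
 { apply Rmult_le_pos. apply Rmult_le_pos; auto. unfold Zw. 
   apply Rle_trans with (Rabs (Zsum w1)). apply Rabs_pos. apply Rle_trans with (Zsum w1). 
   apply Zsum_abs_le. intros; rewrite Rabs_pos_eq; [lra| left; apply w1_pos]. apply Zex_w1. lra.
   apply Rle_trans with (Rabs (Zsum w1)). apply Rabs_pos. 
   apply Zsum_abs_le. intros; rewrite Rabs_pos_eq; [lra| left; apply w1_pos]. apply Zex_w1. }
 intros u Hu.
 replace (C * Zw * Zw) with (Zsum (fun m => (C * Zw) * w1 m)).
 2: { rewrite Zsum_scal. unfold Zw. ring. }
 apply (Zsum_taylor (fun m u => Zsum (fun n => f m n u)) (fun m _ => Zsum (fun n => g m n t))).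
 - intros m. rewrite <- Sw. apply (Zsum_taylor (fun n u => f m n u) (fun n _ => g m n t)).
   intros n. apply H; auto. apply Ew.
   apply (Zex_le _ _ (fun n => H1 m n u Hu)). apply Ew.
   apply (Zex_le _ _ (fun n => H1 m n t Ht0)). apply Ew.
   apply (Zex_le _ _ (fun n => H2 m n)). apply Ew.
 - apply Ew2.
 - apply (Zex_le _ _ (fun m => Bf m u Hu)). apply Ew2.
 - apply (Zex_le _ _ (fun m => Bf m t Ht0)). apply Ew2.
 - apply (Zex_le _ _ (fun m => Bg m)). apply Ew2.
Qed.

Lemma between_abs a b c : Rmin a b <= c <= Rmax a b -> Rabs (c - a) <= Rabs (b - a).
Proof. unfold Rmin, Rmax. destruct (Rle_dec a b); intros [H1 H2];
 unfold Rabs; repeat destruct Rcase_abs; lra. Qed.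

Lemma cont_of_derive f x l : is_derive f x l -> continuity_pt f x.
Proof. intros H. apply is_derive_Reals in H. 
 apply (derivable_continuous_pt f x (exist _ l H)). Qed.

Lemma taylor2 (f f1 f2 : R -> R) t δ C :
 (forall u, Rabs (u-t) < δ -> is_derive f u (f1 u)) ->
 (forall u, Rabs (u-t) < δ -> is_derive f1 u (f2 u)) ->
 (forall u, Rabs (u-t) < δ -> Rabs (f2 u) <= C) ->
 forall u, Rabs (u-t) < δ -> Rabs (f u - f t - (u-t) * f1 t) <= C * (u-t)^2.
Proof. intros D1 D2 B u Hu.
 assert (Hin : forall c, Rmin t u <= c <= Rmax t u -> Rabs (c - t) < δ).
 { intros c Hc. apply between_abs in Hc. lra. }
 destruct (MVT_gen f t u f1) as [c [Hc E]].
 { intros z Hz. apply D1, Hin; lra. }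
 { intros z Hz. apply (cont_of_derive f z (f1 z)), D1, Hin; lra. }
 assert (Hct : Rabs (c - t) <= Rabs (u - t)) by (apply between_abs; auto).
 destruct (MVT_gen f1 t c f2) as [d [Hd E2]].
 { intros z Hz. apply D2. assert (Hz2: Rmin t c <= z <= Rmax t c) by lra. apply between_abs in Hz2. lra. }
 { intros z Hz. apply (cont_of_derive f1 z (f2 z)), D2. apply between_abs in Hz. lra. }
 assert (Hdt : Rabs (d - t) <= Rabs (c - t)) by (apply between_abs; auto).
 assert (Bd : Rabs (f2 d) <= C) by (apply B; lra).
 replace (f u - f t - (u-t) * f1 t) with ((u - t) * (f1 c - f1 t)) by lra.
 rewrite E2. rewrite Rabs_mult, Rabs_mult.
 assert (0 <= Rabs (u-t)) by apply Rabs_pos.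
 assert (0 <= Rabs (c-t)) by apply Rabs_pos.
 assert (0 <= Rabs (f2 d)) by apply Rabs_pos.
 replace ((u-t)^2) with (Rabs (u-t) * Rabs (u-t)).
 2: { rewrite <- Rabs_mult. rewrite Rabs_pos_eq. ring. apply Rle_0_sqr. }
 assert (Rabs (f2 d) * Rabs (c-t) <= C * Rabs (u-t)) by (apply Rmult_le_compat; auto).
 nra. Qed.

Definition isz (m n : Z) : bool := (Z.eqb m 0 && Z.eqb n 0)%bool.
Definition Qf (x : R) (m n : Z) (u : R) : R := (IZR m * x + IZR n)^2 + (IZR m * u)^2.
Definition Pf (m : Z) (u : R) : R := (IZR m * u)^2.
Definition T0 x m n u := if isz m n then 0 else u^3 / (Qf x m n u)^3.
Definition T1 x m n u := if isz m n then 0 else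
  u^2 * (3 / (Qf x m n u)^3 - 6 * Pf m u / (Qf x m n u)^4).
Definition T2 x m n u := if isz m n then 0 else
  u * (6 / (Qf x m n u)^3 - 42 * Pf m u / (Qf x m n u)^4 + 48 * (Pf m u)^2 / (Qf x m n u)^5).
Definition T3 x m n u := if isz m n then 0 else
  (6 / (Qf x m n u)^3 - 162 * Pf m u / (Qf x m n u)^4 + 576 * (Pf m u)^2 / (Qf x m n u)^5
    - 480 * (Pf m u)^3 / (Qf x m n u)^6).

Lemma sqZ (m : Z) : IZR m ^ 2 = 0 /\ m = 0%Z \/ 1 <= IZR m ^ 2.
Proof. destruct (Z.eq_dec m 0) as [->|Hm]. left; split; auto; simpl; ring.
 right. replace (IZR m ^ 2) with (IZR (m*m)) by (rewrite mult_IZR; ring).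
 apply IZR_le. nia. Qed.

Lemma isz_false m n : isz m n = false -> (m <> 0)%Z \/ (n <> 0)%Z.
Proof. unfold isz. destruct (Z.eqb_spec m 0); destruct (Z.eqb_spec n 0); simpl; intros; auto; discriminate. Qed.

Lemma sq_pos_Z (m : Z) : (m <> 0)%Z -> 1 <= IZR m ^ 2.
Proof. intros H. destruct (sqZ m) as [[_ E]|E]; auto. contradiction. Qed.

Lemma Qpos x m n u : isz m n = false -> 0 < u -> 0 < Qf x m n u.
Proof. intros Hz Hu. unfold Qf. destruct (isz_false _ _ Hz) as [H|H].
 - apply sq_pos_Z in H. assert (0 <= (IZR m * x + IZR n)^2) by apply pow2_ge_0.
   assert (0 < (IZR m * u)^2). rewrite Rpow_mult_distr. apply Rmult_lt_0_compat; [lra| apply pow_lt; auto]. lra.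
 - apply sq_pos_Z in H. destruct (sqZ m) as [[E1 E2]|E].
   subst m. simpl. nra.
   assert (0 < (IZR m * u)^2). rewrite Rpow_mult_distr. apply Rmult_lt_0_compat; [lra| apply pow_lt; auto].
   assert (0 <= (IZR m * x + IZR n)^2) by apply pow2_ge_0. lra. Qed.

Lemma PQ x m n u : 0 <= Pf m u <= Qf x m n u.
Proof. unfold Pf, Qf. split. apply pow2_ge_0. generalize (pow2_ge_0 (IZR m * x + IZR n)); lra. Qed.

Ltac qfin HQ :=
  simpl; simpl in HQ;
  match type of HQ with 0 < ?q => set (qq := q) in * end;
  repeat split; try apply Rgt_not_eq; repeat apply Rmult_lt_0_compat; try lra;
  field; lra.

Lemma D0 x m n u : 0 < u -> is_derive (T0 x m n) u (T1 x m n u).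
Proof. intros Hu. unfold T0, T1. destruct (isz m n) eqn:E.
 auto_derive; auto; ring.
 assert (HQ := Qpos x m n u E Hu). unfold Qf, Pf in *.
 auto_derive; qfin HQ. Qed.

Lemma D1 x m n u : 0 < u -> is_derive (T1 x m n) u (T2 x m n u).
Proof. intros Hu. unfold T1, T2. destruct (isz m n) eqn:E.
 auto_derive; auto; ring.
 assert (HQ := Qpos x m n u E Hu). unfold Qf, Pf in *.
 auto_derive; qfin HQ. Qed.

Lemma D2 x m n u : 0 < u -> is_derive (T2 x m n) u (T3 x m n u).
Proof. intros Hu. unfold T2, T3. destruct (isz m n) eqn:E.
 auto_derive; auto; ring.
 assert (HQ := Qpos x m n u E Hu). unfold Qf, Pf in *.
 auto_derive; qfin HQ. Qed.

Definition kap x u0 := Rmin (1/4) (u0^2 / (1 + 4*x^2)).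

Lemma kap_pos x u0 : 0 < u0 -> 0 < kap x u0.
Proof. intros H. unfold kap. apply Rmin_pos. lra. apply Rdiv_lt_0_compat. apply pow_lt; auto.
 generalize (pow2_ge_0 x); lra. Qed.

Lemma abs_le_inv a b : Rabs a <= b -> -b <= a <= b.
Proof. unfold Rabs; destruct Rcase_abs; lra. Qed.

Lemma half_sq (c b : R) : c^2 <= b^2/4 -> b^2/4 <= (c+b)^2.
Proof. intros H.
 assert (Hc : Rabs c <= Rabs (b/2)). apply Rsqr_le_abs_0. unfold Rsqr. 
 replace (b/2*(b/2)) with (b^2/4) by field. replace (c*c) with (c^2) by ring. auto.
 assert (0 <= (c + b/2) * (c + 3*b/2) ).
 { destruct (Rle_dec 0 b).
   - rewrite (Rabs_pos_eq (b/2)) in Hc by lra. apply abs_le_inv in Hc. apply Rmult_le_pos; lra.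
   - rewrite (Rabs_left (b/2)) in Hc by lra. apply abs_le_inv in Hc.
     replace ((c + b/2) * (c + 3*b/2)) with ((-(c + b/2)) * (-(c + 3*b/2))) by ring.
     apply Rmult_le_pos; lra. }
 nra. Qed.

Lemma Q_lower x m n u0 u : 0 < u0 <= u -> kap x u0 * (IZR m^2 + IZR n^2) <= Qf x m n u.
Proof. intros [H0 H1]. unfold Qf. set (a := IZR m). set (b := IZR n). set (k := kap x u0).
 assert (hx : 1 <= 1 + 4*x^2) by (generalize (pow2_ge_0 x); lra).
 assert (k1 : k <= 1/4) by apply Rmin_l.
 assert (k2 : k <= u0^2 / (1 + 4*x^2)) by apply Rmin_r.
 assert (k3 : k * (1 + 4*x^2) <= u0^2).
 { apply Rmult_le_reg_r with (/ (1 + 4*x^2)). apply Rinv_0_lt_compat; lra.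
   rewrite Rmult_assoc, Rinv_r by lra. lra. }
 assert (kp : 0 < k) by (apply kap_pos; auto).
 assert (u2 : u0^2 <= u^2) by (apply pow_incr; lra).
 assert (k4 : k <= u^2) by nra.
 assert (a2 : 0 <= a^2) by apply pow2_ge_0. assert (b2 : 0 <= b^2) by apply pow2_ge_0.
 assert (x2 : 0 <= x^2) by apply pow2_ge_0.
 destruct (Rle_dec (4 * (a*x)^2) (b^2)) as [Hc|Hc].
 - assert (E : b^2/4 <= (a*x + b)^2) by (apply half_sq; lra).
   rewrite Rpow_mult_distr. assert (k * a^2 <= a^2 * u^2) by nra. nra.
 - assert (b^2 <= 4 * a^2 * x^2) by (rewrite Rpow_mult_distr in Hc; lra).
   assert (k * (a^2 + b^2) <= k * (a^2 * (1 + 4*x^2))) by nra.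
   assert (k * (a^2 * (1 + 4*x^2)) <= a^2 * u^2) by nra.
   assert (0 <= (a*x+b)^2) by apply pow2_ge_0.
   rewrite Rpow_mult_distr. nra. Qed.

Definition Kc x u0 := 2 / (kap x u0)^3.

Lemma Kc_pos x u0 : 0 < u0 -> 0 < Kc x u0.
Proof. intros H. unfold Kc. apply Rdiv_lt_0_compat. lra. apply pow_lt, kap_pos; auto. Qed.

Lemma S_bound (m n : Z) : isz m n = false ->
  1 <= IZR m^2 + IZR n^2 /\ (1 + IZR m^2) * (1 + IZR n^2) <= 2 * (IZR m^2 + IZR n^2)^2.
Proof. intros Hz. destruct (isz_false _ _ Hz) as [H|H].
 - apply sq_pos_Z in H. destruct (sqZ n) as [[E _]|E]; rewrite ?E; split; nra.
 - apply sq_pos_Z in H. destruct (sqZ m) as [[E _]|E]; rewrite ?E; split; nra. Qed.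

Lemma invQ3 x m n u0 u : isz m n = false -> 0 < u0 <= u ->
  / Qf x m n u ^ 3 <= Kc x u0 * (w1 m * w1 n).
Proof. intros Hz Hu. destruct (S_bound m n Hz) as [S1 S2].
 assert (L := Q_lower x m n u0 u Hu).
 assert (kp := kap_pos x u0 (proj1 Hu)).
 set (k := kap x u0) in *. set (S := IZR m ^ 2 + IZR n ^ 2) in *.
 assert (HQ : 0 < Qf x m n u) by (apply Qpos; auto; lra).
 unfold Kc, w1. fold k.
 assert (P1 : 0 < 1 + IZR m ^2) by (generalize (pow2_ge_0 (IZR m)); lra).
 assert (P2 : 0 < 1 + IZR n ^2) by (generalize (pow2_ge_0 (IZR n)); lra).
 replace (2 / k ^ 3 * (/ (1 + IZR m ^ 2) * / (1 + IZR n ^ 2))) with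
   (/ (k^3 * ((1 + IZR m ^ 2) * (1 + IZR n ^ 2)) / 2)) by (field; repeat split; lra).
 apply Rinv_le_contravar. 
 apply Rdiv_lt_0_compat; [|lra]. apply Rmult_lt_0_compat. apply pow_lt; auto. nra.
 apply Rle_trans with (k^3 * S^3).
 - assert (S^2 <= S^3) by (simpl; nra).
   assert (0 < k^3) by (apply pow_lt; auto).
   apply Rle_trans with (k^3 * S^2). 
   replace (k ^ 3 * ((1 + IZR m ^ 2) * (1 + IZR n ^ 2)) / 2) with (k^3 * (((1 + IZR m ^ 2) * (1 + IZR n ^ 2)) / 2)) by (field).
   apply Rmult_le_compat_l; lra. apply Rmult_le_compat_l; lra.
 - rewrite <- Rpow_mult_distr. apply pow_incr. split; nra. Qed.

Lemma poly_bound (a b c d r : R) : 0 <= r <= 1 ->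
  Rabs (a + b*r + c*r^2 + d*r^3) <= Rabs a + Rabs b + Rabs c + Rabs d.
Proof. intros Hr.
 assert (r2 : 0 <= r^2 <= 1) by (simpl; split; nra).
 assert (r3 : 0 <= r^3 <= 1) by (simpl; split; nra).
 eapply Rle_trans. apply Rabs_triang. eapply Rle_trans. apply Rplus_le_compat_r. apply Rabs_triang.
 eapply Rle_trans. apply Rplus_le_compat_r. apply Rplus_le_compat_r. apply Rabs_triang.
 rewrite !Rabs_mult. rewrite (Rabs_pos_eq r) by lra. rewrite (Rabs_pos_eq (r^2)) by lra. rewrite (Rabs_pos_eq (r^3)) by lra.
 assert (0 <= Rabs b) by apply Rabs_pos. assert (0 <= Rabs c) by apply Rabs_pos. assert (0 <= Rabs d) by apply Rabs_pos.
 nra. Qed.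

Lemma form_bound (Q P a b c d : R) : 0 < Q -> 0 <= P <= Q ->
  Rabs (a / Q^3 + b * P / Q^4 + c * P^2 / Q^5 + d * P^3 / Q^6) <= (Rabs a + Rabs b + Rabs c + Rabs d) / Q^3.
Proof. intros HQ HP.
 replace (a / Q^3 + b * P / Q^4 + c * P^2 / Q^5 + d * P^3 / Q^6) with
   ((a + b*(P/Q) + c*(P/Q)^2 + d*(P/Q)^3) * / Q^3) by (field; lra).
 rewrite Rabs_mult. rewrite (Rabs_pos_eq (/ Q^3)) by (left; apply Rinv_0_lt_compat, pow_lt; auto).
 unfold Rdiv. apply Rmult_le_compat_r. left; apply Rinv_0_lt_compat, pow_lt; auto.
 apply poly_bound. split. apply Rdiv_le_0_compat; lra.
 apply Rmult_le_reg_r with Q; auto. unfold Rdiv. rewrite Rmult_assoc, Rinv_l; lra. Qed.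

Lemma W_pos m n : 0 < w1 m * w1 n.
Proof. apply Rmult_lt_0_compat; apply w1_pos. Qed.

Ltac bnd_tac x m n a b c d u0 u Hu E :=
  let HQ := fresh in let HP := fresh in let HI := fresh in
  assert (HQ := Qpos x m n u E (Rlt_le_trans _ _ _ (proj1 Hu) (proj2 Hu)));
  assert (HP := PQ x m n u);
  assert (HI := invQ3 x m n u0 u E Hu);
  assert (FB := form_bound (Qf x m n u) (Pf m u) a b c d HQ HP).

Lemma bnd0 x m n u0 u : 0 < u0 <= u -> Rabs (T0 x m n u) <= (u^3 * Kc x u0) * (w1 m * w1 n).
Proof. intros Hu. assert (0 < Kc x u0) by (apply Kc_pos; lra). assert (W := W_pos m n).
 assert (0 < u^3) by (apply pow_lt; lra).
 unfold T0. destruct (isz m n) eqn:E. rewrite Rabs_R0. left. apply Rmult_lt_0_compat; auto. apply Rmult_lt_0_compat; auto.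
 assert (HQ := Qpos x m n u E (Rlt_le_trans _ _ _ (proj1 Hu) (proj2 Hu))).
 assert (HI := invQ3 x m n u0 u E Hu).
 rewrite Rabs_pos_eq. unfold Rdiv. rewrite Rmult_assoc. apply Rmult_le_compat_l; lra.
 left. apply Rdiv_lt_0_compat; auto. apply pow_lt; auto. Qed.

Lemma bnd1 x m n u0 u : 0 < u0 <= u -> Rabs (T1 x m n u) <= (9 * u^2 * Kc x u0) * (w1 m * w1 n).
Proof. intros Hu. assert (0 < Kc x u0) by (apply Kc_pos; lra). assert (W := W_pos m n).
 assert (0 < u^2) by (apply pow_lt; lra).
 unfold T1. destruct (isz m n) eqn:E. rewrite Rabs_R0. left. apply Rmult_lt_0_compat; auto. apply Rmult_lt_0_compat; auto. lra.
 bnd_tac x m n 3 (-6) 0 0 u0 u Hu E.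
 replace (3 / Qf x m n u ^ 3 - 6 * Pf m u / Qf x m n u ^ 4) with
   (3 / Qf x m n u ^ 3 + -6 * Pf m u / Qf x m n u ^ 4 + 0 * Pf m u ^ 2 / Qf x m n u ^ 5 + 0 * Pf m u ^ 3 / Qf x m n u ^ 6)
   by (field; lra).
 rewrite Rabs_mult, (Rabs_pos_eq (u^2)) by lra.
 replace (Rabs 3 + Rabs (-6) + Rabs 0 + Rabs 0) with 9 in FB.
 2: { unfold Rabs; repeat destruct Rcase_abs; lra. }
 replace (9 * u^2 * Kc x u0 * (w1 m * w1 n)) with (u^2 * (9 * (Kc x u0 * (w1 m * w1 n)))) by ring.
 apply Rmult_le_compat_l. lra. eapply Rle_trans. exact FB. unfold Rdiv. apply Rmult_le_compat_l; lra. Qed.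

Lemma bnd2 x m n u0 u : 0 < u0 <= u -> Rabs (T2 x m n u) <= (96 * u * Kc x u0) * (w1 m * w1 n).
Proof. intros Hu. assert (0 < Kc x u0) by (apply Kc_pos; lra). assert (W := W_pos m n).
 unfold T2. destruct (isz m n) eqn:E. rewrite Rabs_R0. left. apply Rmult_lt_0_compat; auto. apply Rmult_lt_0_compat; auto. lra.
 bnd_tac x m n 6 (-42) 48 0 u0 u Hu E.
 replace (6 / Qf x m n u ^ 3 - 42 * Pf m u / Qf x m n u ^ 4 + 48 * Pf m u ^ 2 / Qf x m n u ^ 5) with
   (6 / Qf x m n u ^ 3 + -42 * Pf m u / Qf x m n u ^ 4 + 48 * Pf m u ^ 2 / Qf x m n u ^ 5 + 0 * Pf m u ^ 3 / Qf x m n u ^ 6)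
   by (field; lra).
 rewrite Rabs_mult, (Rabs_pos_eq u) by lra.
 replace (Rabs 6 + Rabs (-42) + Rabs 48 + Rabs 0) with 96 in FB.
 2: { unfold Rabs; repeat destruct Rcase_abs; lra. }
 replace (96 * u * Kc x u0 * (w1 m * w1 n)) with (u * (96 * (Kc x u0 * (w1 m * w1 n)))) by ring.
 apply Rmult_le_compat_l. lra. eapply Rle_trans. exact FB. unfold Rdiv. apply Rmult_le_compat_l; lra. Qed.

Lemma bnd3 x m n u0 u : 0 < u0 <= u -> Rabs (T3 x m n u) <= (1224 * Kc x u0) * (w1 m * w1 n).
Proof. intros Hu. assert (0 < Kc x u0) by (apply Kc_pos; lra). assert (W := W_pos m n).
 unfold T3. destruct (isz m n) eqn:E. rewrite Rabs_R0. left. apply Rmult_lt_0_compat; auto. apply Rmult_lt_0_compat; auto. lra.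
 bnd_tac x m n 6 (-162) 576 (-480) u0 u Hu E.
 replace (6 / Qf x m n u ^ 3 - 162 * Pf m u / Qf x m n u ^ 4 + 576 * Pf m u ^ 2 / Qf x m n u ^ 5 - 480 * Pf m u ^ 3 / Qf x m n u ^ 6) with
   (6 / Qf x m n u ^ 3 + -162 * Pf m u / Qf x m n u ^ 4 + 576 * Pf m u ^ 2 / Qf x m n u ^ 5 + -480 * Pf m u ^ 3 / Qf x m n u ^ 6)
   by (field; lra).
 replace (Rabs 6 + Rabs (-162) + Rabs 576 + Rabs (-480)) with 1224 in FB.
 2: { unfold Rabs; repeat destruct Rcase_abs; lra. }
 eapply Rle_trans. exact FB. unfold Rdiv. rewrite Rmult_assoc. apply Rmult_le_compat_l; lra. Qed.


Lemma near_t t u : 0 < t -> Rabs (u - t) < t/2 -> t/2 < u < 3*t/2.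
Proof. unfold Rabs; destruct Rcase_abs; intros; lra. Qed.

Lemma rp3 z : 0 < z -> Rpower z 3 = z^3.
Proof. intros H. rewrite <- Rpower_pow by auto. f_equal. simpl. ring. Qed.

Lemma zeta_eq x u : 0 < u -> zeta 3 x u = Zsum (fun m => Zsum (fun n => T0 x m n u)).
Proof. intros Hu. unfold zeta. apply Zsum_ext; intros m. apply Zsum_ext; intros n.
 unfold zeta_term, T0. fold (isz m n). destruct (isz m n) eqn:E; auto.
 assert (HQ := Qpos x m n u E Hu). unfold Qf in *.
 rewrite rp3 by auto. rewrite rp3 by auto. auto. Qed.

Definition d1 x t := Zsum (fun m => Zsum (fun n => T1 x m n t)).
Definition d2 x t := Zsum (fun m => Zsum (fun n => T2 x m n t)).

Theorem deriv1 x t : 0 < t -> is_derive (fun u => zeta 3 x u) t (d1 x t).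
Proof. intros Ht.
 apply (is_derive_ext_loc (fun u => Zsum (fun m => Zsum (fun n => T0 x m n u)))).
 { exists (mkposreal (t/2) ltac:(lra)). intros u Hu. simpl in Hu. unfold ball in Hu; simpl in Hu.
   unfold AbsRing_ball, abs, minus, plus, opp in Hu; simpl in Hu.
   symmetry. apply zeta_eq. apply near_t in Hu; lra. }
 assert (Kp : 0 < Kc x (t/2)) by (apply Kc_pos; lra).
 apply (nested _ _ t (t/2) (96 * (3*t/2) * Kc x (t/2)) ((3*t/2)^3 * Kc x (t/2)) (9 * t^2 * Kc x (t/2))).
 - lra.
 - left. apply Rmult_lt_0_compat; lra.
 - intros m n u Hu. replace (96 * (3 * t / 2) * Kc x (t / 2) * (w1 m * w1 n) * (u - t) ^ 2) with
     ((96 * (3 * t / 2) * Kc x (t / 2) * (w1 m * w1 n)) * (u - t) ^ 2) by ring.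
   apply (taylor2 (T0 x m n) (T1 x m n) (T2 x m n) t (t/2)); auto.
   + intros v Hv. apply near_t in Hv; auto. apply D0; lra.
   + intros v Hv. apply near_t in Hv; auto. apply D1; lra.
   + intros v Hv. apply near_t in Hv; auto. eapply Rle_trans. apply (bnd2 x m n (t/2) v); lra.
     assert (W := W_pos m n). apply Rmult_le_compat_r; [lra|]. apply Rmult_le_compat_r; [lra|]. lra.
 - intros m n u Hu. apply near_t in Hu; auto. eapply Rle_trans. apply (bnd0 x m n (t/2) u); lra.
   assert (W := W_pos m n). apply Rmult_le_compat_r; [lra|]. apply Rmult_le_compat_r; [lra|].
   apply pow_incr; lra.
 - intros m n. apply (bnd1 x m n (t/2) t); lra.
Qed.

Theorem deriv2 x t : 0 < t -> is_derive (d1 x) t (d2 x t).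
Proof. intros Ht. unfold d1, d2.
 assert (Kp : 0 < Kc x (t/2)) by (apply Kc_pos; lra).
 apply (nested _ _ t (t/2) (1224 * Kc x (t/2)) (9 * (3*t/2)^2 * Kc x (t/2)) (96 * t * Kc x (t/2))).
 - lra.
 - left. apply Rmult_lt_0_compat; lra.
 - intros m n u Hu. replace (1224 * Kc x (t / 2) * (w1 m * w1 n) * (u - t) ^ 2) with
     ((1224 * Kc x (t / 2) * (w1 m * w1 n)) * (u - t) ^ 2) by ring.
   apply (taylor2 (T1 x m n) (T2 x m n) (T3 x m n) t (t/2)); auto.
   + intros v Hv. apply near_t in Hv; auto. apply D1; lra.
   + intros v Hv. apply near_t in Hv; auto. apply D2; lra.
   + intros v Hv. apply near_t in Hv; auto. apply (bnd3 x m n (t/2) v); lra.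
 - intros m n u Hu. apply near_t in Hu; auto. eapply Rle_trans. apply (bnd1 x m n (t/2) u); lra.
   assert (W := W_pos m n). apply Rmult_le_compat_r; [lra|]. apply Rmult_le_compat_r; [lra|].
   apply Rmult_le_compat_l; [lra|]. apply pow_incr; lra.
 - intros m n. apply (bnd2 x m n (t/2) t); lra.
Qed.

Lemma c0b (q:R) : 1 <= q -> 7*q - q^2 - 8 <= 3/40 * q^5.
Proof. intros. 
assert (h2: 0 <= (q - 176/100)^2) by apply pow2_ge_0.
assert (h3: 0 <= q^3*(q - 176/100)^2) by (apply Rmult_le_pos; [apply pow_le; lra| exact h2]).
assert (h4: 0 <= q^2*(q - 176/100)^2) by (apply Rmult_le_pos; [apply pow_le; lra| exact h2]).
assert (h5: 0 <= q*(q - 176/100)^2) by (apply Rmult_le_pos; [lra| exact h2]).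
assert (h6: 0 <= (q-1)*(q - 176/100)^2) by (apply Rmult_le_pos; [lra| exact h2]).
nra.
Qed.

Definition phi (s y a : R) := 6 * y * Rmin (3/40 / s^3) (17/32 / (a^2 + s)^3).

Lemma phi_nonneg s y a : 0 < s -> 0 < y -> 0 <= phi s y a.
Proof. intros Hs Hy. unfold phi. apply Rmult_le_pos. lra.
 apply Rmin_glb; left; apply Rdiv_lt_0_compat; try lra; apply pow_lt.
 auto. generalize (pow2_ge_0 a); lra. Qed.

Lemma phi_mono s y a b : 0 < s -> 0 < y -> b^2 <= a^2 -> phi s y a <= phi s y b.
Proof. intros Hs Hy H. unfold phi. apply Rmult_le_compat_l. lra.
 assert (17/32 / (a^2+s)^3 <= 17/32 / (b^2+s)^3).
 { unfold Rdiv. apply Rmult_le_compat_l. lra. apply Rinv_le_contravar.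
   apply pow_lt. generalize (pow2_ge_0 b); lra. apply pow_incr. generalize (pow2_ge_0 b); lra. }
 unfold Rmin. repeat destruct Rle_dec; lra. Qed.

Lemma phi_le_A s y a : 0 < s -> 0 < y -> phi s y a <= 6 * y * (17/32) * / (a^2+s)^3.
Proof. intros. unfold phi. replace (6 * y * (17/32) * / (a^2+s)^3) with (6*y*(17/32 / (a^2+s)^3)) by (unfold Rdiv; ring).
 apply Rmult_le_compat_l. lra. apply Rmin_r. Qed.

Lemma phi_le_c s y a : 0 < s -> 0 < y -> phi s y a <= 6 * y * (3/40) * / s^3.
Proof. intros. unfold phi. replace (6 * y * (3/40) * / s^3) with (6*y*(3/40 / s^3)) by (unfold Rdiv; ring).
 apply Rmult_le_compat_l. lra. apply Rmin_l. Qed.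

Lemma T2_lower x m n y : (m <> 0)%Z -> 0 < y ->
  - phi (Pf m y) y (IZR m * x + IZR n) <= T2 x m n y.
Proof. intros Hm Hy.
 assert (Hz : isz m n = false) by (unfold isz; destruct (Z.eqb_spec m 0); simpl; auto; contradiction).
 unfold T2. rewrite Hz.
 assert (HP : 0 < Pf m y). { unfold Pf. rewrite Rpow_mult_distr. apply Rmult_lt_0_compat.
   generalize (sq_pos_Z m Hm); lra. apply pow_lt; auto. }
 assert (EQ : Qf x m n y = (IZR m * x + IZR n)^2 + Pf m y) by reflexivity.
 set (Q := Qf x m n y) in *. set (P := Pf m y) in *.
 assert (HQP : P <= Q) by (generalize (pow2_ge_0 (IZR m * x + IZR n)); lra).
 assert (HQ : 0 < Q) by lra.
 set (X := 6 / Q ^ 3 - 42 * P / Q ^ 4 + 48 * P ^ 2 / Q ^ 5).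
 assert (XA : - (6 * (17/32) / Q^3) <= X).
 { unfold X. assert (0 <= (49/32) * (Q - 16*P/7)^2) by (apply Rmult_le_pos; [lra | apply pow2_ge_0]).
   assert (EE : 6 / Q ^ 3 - 42 * P / Q ^ 4 + 48 * P ^ 2 / Q ^ 5 + (6 * (17/32) / Q^3) =
     (6 * ((49/32) * (Q - 16*P/7)^2) / Q^5)) by (field; lra).
   assert (0 <= 6 * ((49/32) * (Q - 16*P/7)^2) / Q^5).
   { apply Rdiv_le_0_compat. lra. apply pow_lt; auto. } lra. }
 assert (XC : - (6 * (3/40) / P^3) <= X).
 { set (q := Q / P). assert (Hq : 1 <= q). { unfold q. apply Rmult_le_reg_r with P; auto. unfold Rdiv. rewrite Rmult_assoc, Rinv_l; lra. }
   assert (EQq : Q = q * P) by (unfold q; field; lra).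
   assert (HB := c0b q Hq).
   unfold X. rewrite EQq.
   assert (0 <= 6 * (3/40 * q^5 - (7*q - q^2 - 8)) / (q^5 * P^3)).
   { apply Rdiv_le_0_compat. lra. apply Rmult_lt_0_compat; apply pow_lt; lra. }
   assert (EE : 6 / (q * P) ^ 3 - 42 * P / (q * P) ^ 4 + 48 * P ^ 2 / (q * P) ^ 5 + 6 * (3 / 40) / P ^ 3 =
     (6 * (3/40 * q^5 - (7*q - q^2 - 8)) / (q^5 * P^3))) by (field; lra). 
   lra. }
 unfold phi. fold Q. fold P.
 assert (- Rmin (3 / 40 / P ^ 3) (17 / 32 / (Q) ^ 3) * 6 <= X).
 { unfold Rmin. destruct Rle_dec. unfold Rdiv in *; lra. unfold Rdiv in *; lra. }
 replace ((IZR m * x + IZR n) ^ 2 + P) with Q by lra.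
 assert (y * (- Rmin (3 / 40 / P ^ 3) (17 / 32 / Q ^ 3) * 6) <= y * X) by (apply Rmult_le_compat_l; lra).
 lra. Qed.

Lemma Zsum_shift1 f : Zex f -> Zex (fun n => f (n+1)%Z) /\ Zsum (fun n => f (n+1)%Z) = Zsum f.
Proof. intros [H1 H2].
 assert (E1 : forall k, f (Z.of_nat k + 1)%Z = f (Z.of_nat (S k))) by (intros; f_equal; lia).
 assert (E2 : forall k, f (- Z.of_nat (S k) + 1)%Z = f (- Z.of_nat k)%Z) by (intros; f_equal; lia).
 assert (X1 : ex_series (fun k => f (Z.of_nat (S k)))) by (apply (ex_series_incr_1 (fun k => f (Z.of_nat k))); auto).
 assert (X2 : ex_series (fun k => f (- Z.of_nat k)%Z)).
 { apply (ex_series_incr_1 (fun k => f (- Z.of_nat k)%Z)). auto. }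
 split. split.
 - apply (ex_series_ext (fun k => f (Z.of_nat (S k)))); auto.
 - apply (ex_series_ext (fun k => f (- Z.of_nat k)%Z)); auto.
 - unfold Zsum. rewrite (Series_ext _ _ E1), (Series_ext _ _ E2).
   rewrite (Series_incr_1 (fun k => f (Z.of_nat k))) by auto.
   rewrite (Series_incr_1 (fun k => f (- Z.of_nat k)%Z)) by auto. simpl. ring. Qed.

Lemma Zsum_shiftm1 f : Zex f -> Zex (fun n => f (n-1)%Z) /\ Zsum (fun n => f (n-1)%Z) = Zsum f.
Proof. intros [H1 H2].
 assert (E1 : forall k, f (Z.of_nat (S k) - 1)%Z = f (Z.of_nat k)) by (intros; f_equal; lia).
 assert (E2 : forall k, f (- Z.of_nat (S k) - 1)%Z = f (- Z.of_nat (S (S k)))%Z) by (intros; f_equal; lia).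
 assert (X1 : ex_series (fun k => f (Z.of_nat k - 1)%Z)).
 { apply (ex_series_incr_1 (fun k => f (Z.of_nat k - 1)%Z)). apply (ex_series_ext (fun k => f (Z.of_nat k))); auto. }
 assert (X2 : ex_series (fun k => f (- Z.of_nat (S (S k)))%Z)).
 { apply (ex_series_incr_1 (fun k => f (- Z.of_nat (S k))%Z)). auto. }
 split. split; auto.
 - apply (ex_series_ext (fun k => f (- Z.of_nat (S (S k)))%Z)); auto.
 - unfold Zsum. rewrite (Series_ext _ _ E2).
   rewrite (Series_incr_1 (fun k => f (Z.of_nat k - 1)%Z)) by auto.
   rewrite (Series_incr_1 (fun k => f (- Z.of_nat (S k))%Z)) by auto.
   rewrite (Series_ext _ _ E1). simpl. ring. Qed.

Lemma Zsum_shift_nat f p : Zex f ->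
  (Zex (fun n => f (n + Z.of_nat p)%Z) /\ Zsum (fun n => f (n + Z.of_nat p)%Z) = Zsum f) /\
  (Zex (fun n => f (n - Z.of_nat p)%Z) /\ Zsum (fun n => f (n - Z.of_nat p)%Z) = Zsum f).
Proof. intros H. induction p.
 - simpl. split; split.
   apply (Zex_ext f); [intros; f_equal; simpl; lia | auto].
   apply Zsum_ext; intros; f_equal; lia.
   apply (Zex_ext f); [intros; f_equal; simpl; lia | auto].
   apply Zsum_ext; intros; f_equal; lia.
 - destruct IHp as [[A1 A2] [B1 B2]].
   destruct (Zsum_shift1 _ A1) as [C1 C2]. destruct (Zsum_shiftm1 _ B1) as [D1 D2].
   split; split.
   + apply (Zex_ext (fun n => f (n + 1 + Z.of_nat p)%Z)); [intros; f_equal; lia | exact C1].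
   + rewrite <- A2, <- C2. apply Zsum_ext; intros; f_equal; lia.
   + apply (Zex_ext (fun n => f (n - 1 - Z.of_nat p)%Z)); [intros; f_equal; lia | exact D1].
   + rewrite <- B2, <- D2. apply Zsum_ext; intros; f_equal; lia.
Qed.

Lemma Zsum_shift f z : Zex f -> Zex (fun n => f (n + z)%Z) /\ Zsum (fun n => f (n + z)%Z) = Zsum f.
Proof. intros H. destruct (Z_le_gt_dec 0 z).
 - destruct (Zsum_shift_nat f (Z.to_nat z) H) as [[A1 A2] _].
   rewrite Z2Nat.id in A1, A2 by lia. auto.
 - destruct (Zsum_shift_nat f (Z.to_nat (-z)) H) as [_ [A1 A2]].
   rewrite Z2Nat.id in A1, A2 by lia. split.
   apply (Zex_ext (fun n => f (n - - z)%Z)); [intros; f_equal; lia | exact A1].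
   rewrite <- A2. apply Zsum_ext; intros; f_equal; lia. Qed.

Lemma Zsum_family (g : R -> R) c : (forall a, 0 <= g a) ->
  (forall a (j : nat), INR j <= Rabs a -> g a <= g (INR j)) ->
  ex_series (fun j => g (INR j)) -> Zex (fun n => g (c + IZR n)) ->
  Zsum (fun n => g (c + IZR n)) <= 2 * Series (fun j => g (INR j)).
Proof. intros Hp Hm Hs Hz.
 destruct (archimed c) as [U1 U2].
 set (z := (1 - up c)%Z).
 set (c' := c + IZR z).
 assert (Hc : 0 <= c' < 1). { unfold c', z. rewrite minus_IZR. simpl. lra. }
 destruct (Zsum_shift _ z Hz) as [_ E]. rewrite <- E.
 rewrite (Zsum_ext _ (fun n => g (c' + IZR n))).
 2: { intros n. f_equal. unfold c'. rewrite plus_IZR. ring. }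
 unfold Zsum.
 assert (S1 : Series (fun k => g (c' + IZR (Z.of_nat k))) <= Series (fun j => g (INR j))).
 { apply Series_le; auto. intros k; split; auto. apply Hm. rewrite <- INR_IZR_INZ.
   rewrite Rabs_pos_eq. lra. generalize (pos_INR k); lra. }
 assert (S2 : Series (fun k => g (c' + IZR (- Z.of_nat (S k)))) <= Series (fun j => g (INR j))).
 { apply Series_le; auto. intros k; split; auto. apply Hm. rewrite opp_IZR, <- INR_IZR_INZ, S_INR.
   rewrite Rabs_left1. lra. generalize (pos_INR k); lra. }
 lra. Qed.

Lemma ZexT2 x m y : 0 < y -> Zex (fun n => T2 x m n y).
Proof. intros Hy. apply (Zex_le _ (fun n => (96 * y * Kc x y * w1 m) * w1 n)).
 intros n. rewrite Rmult_assoc. apply (bnd2 x m n y y). lra.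
 apply Zex_scal, Zex_w1. Qed.

Lemma Zex_phi x m y : (m <> 0)%Z -> 0 < y -> Zex (fun n => phi (Pf m y) y (IZR m * x + IZR n)).
Proof. intros Hm Hy.
 assert (HP : 0 < Pf m y). { unfold Pf. rewrite Rpow_mult_distr. apply Rmult_lt_0_compat.
   generalize (sq_pos_Z m Hm); lra. apply pow_lt; auto. }
 assert (Hz : isz m 0 = false) by (unfold isz; destruct (Z.eqb_spec m 0); simpl; auto; contradiction).
 apply (Zex_le _ (fun n => (6 * y * (17/32) * Kc x y * w1 m) * w1 n)).
 2: apply Zex_scal, Zex_w1.
 intros n. rewrite Rabs_pos_eq by (apply phi_nonneg; auto).
 assert (Hzn : isz m n = false) by (unfold isz; destruct (Z.eqb_spec m 0); simpl; auto; contradiction).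
 eapply Rle_trans. apply phi_le_A; auto.
 assert (I := invQ3 x m n y y Hzn (conj Hy (Rle_refl y))). unfold Qf in I. fold (Pf m y) in I.
 replace (6 * y * (17 / 32) * Kc x y * w1 m * w1 n) with ((6 * y * (17/32)) * (Kc x y * (w1 m * w1 n))) by ring.
 apply Rmult_le_compat_l; auto. lra. Qed.

Lemma ex_phi m y : (m <> 0)%Z -> 0 < y -> ex_series (fun j => phi (Pf m y) y (INR j)).
Proof. intros Hm Hy. destruct (Zex_phi 0 m y Hm Hy) as [H _].
 apply (ex_series_ext (fun k => phi (Pf m y) y (IZR m * 0 + IZR (Z.of_nat k)))); auto.
 intros k. f_equal. rewrite <- INR_IZR_INZ. ring. Qed.

Lemma row_phi x m y : (m <> 0)%Z -> 0 < y ->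
  - 2 * Series (fun j => phi (Pf m y) y (INR j)) <= Zsum (fun n => T2 x m n y).
Proof. intros Hm Hy.
 assert (HP : 0 < Pf m y). { unfold Pf. rewrite Rpow_mult_distr. apply Rmult_lt_0_compat.
   generalize (sq_pos_Z m Hm); lra. apply pow_lt; auto. }
 assert (F := Zsum_family (phi (Pf m y) y) (IZR m * x)).
 assert (Hf : Zsum (fun n => phi (Pf m y) y (IZR m * x + IZR n)) <= 2 * Series (fun j => phi (Pf m y) y (INR j))).
 { apply F. intros; apply phi_nonneg; auto.
   intros a j Hj. apply phi_mono; auto. assert (0 <= INR j) by apply pos_INR.
   assert (Ea : a^2 = Rabs a ^2) by (unfold Rabs; destruct Rcase_abs; ring).
   rewrite Ea. apply pow_incr; split; auto.
   apply ex_phi; auto. apply Zex_phi; auto. }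
 assert (L : Zsum (fun n => -1 * phi (Pf m y) y (IZR m * x + IZR n)) <= Zsum (fun n => T2 x m n y)).
 { apply Zsum_le. apply Zex_scal, Zex_phi; auto. apply ZexT2; auto.
   intros n. generalize (T2_lower x m n y Hm Hy). lra. }
 rewrite Zsum_scal in L. lra. Qed.

Definition U (M : R) := 3/40 * (4/(3*M))^3 + 17/32 * (/(1 + 3*M/4)^3 + /(4 + 3*M/4)^3 + /(9 + 3*M/4)^3 + /(3*(16 + 3*M/4)^2)).

Lemma inv3_le c B B' : 0 <= c -> 0 < B -> B <= B' -> / (c + B')^3 <= / (c + B)^3.
Proof. intros. apply Rinv_le_contravar. apply pow_lt; lra. apply pow_incr; lra. Qed.

Lemma phi_U m y : (m <> 0)%Z -> 0 < y -> 3/4 <= y^2 ->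
  Series (fun j => phi (Pf m y) y (INR j)) <= 6 * y * U (IZR m ^ 2).
Proof. intros Hm Hy Hy2.
 set (M := IZR m ^ 2). assert (HM : 1 <= M) by (apply sq_pos_Z; auto).
 assert (EP : Pf m y = M * y^2) by (unfold Pf, M; ring).
 assert (HP : 3*M/4 <= Pf m y) by (rewrite EP; nra).
 set (B := 3*M/4) in *. assert (HB : 0 < B) by (unfold B; lra).
 assert (HP0 : 0 < Pf m y) by lra.
 set (P := Pf m y) in *.
 assert (E := ex_phi m y Hm Hy). fold P in E.
 rewrite (Series_incr_n _ 4) by (auto; lia). simpl sum_f_R0.
 assert (A0 : phi P y (INR 0) <= 6 * y * (3/40 * (4/(3*M))^3)).
 { eapply Rle_trans. apply phi_le_c; auto. replace (6 * y * (3 / 40 * (4 / (3 * M)) ^ 3)) with (6 * y * (3/40) * / B^3).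
   apply Rmult_le_compat_l. lra. apply Rinv_le_contravar. apply pow_lt; auto. apply pow_incr; lra.
   unfold B. field. lra. }
 assert (Aj : forall j : nat, phi P y (INR j) <= 6 * y * (17/32) * / (INR j ^2 + B)^3).
 { intros j. eapply Rle_trans. apply phi_le_A; auto. apply Rmult_le_compat_l. lra.
   apply inv3_le; auto. apply pow2_ge_0. }
 assert (A1 := Aj 1%nat). assert (A2 := Aj 2%nat). assert (A3 := Aj 3%nat). simpl INR in A1, A2, A3.
 assert (T : Series (fun k => phi P y (INR (4 + k))) <= 6 * y * (17/32) * / (16 + B)^2 / 3).
 { apply Series_tele_le. lra. intros k. split. apply phi_nonneg; auto.
   eapply Rle_trans. apply Aj. rewrite plus_INR. replace (INR 4) with 4 by (simpl; ring).
   assert (0 <= INR k) by apply pos_INR.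
   replace (6 * y * (17 / 32) * / (16 + B) ^ 2 * (/ (INR k + 3) - / (INR k + 1 + 3))) with
     (6 * y * (17 / 32) * / ((16 + B) ^ 2 * ((INR k + 3) * (INR k + 4)))) by (field; lra).
   apply Rmult_le_compat_l. lra. apply Rinv_le_contravar.
   apply Rmult_lt_0_compat. apply pow_lt; lra. nra.
   set (QQ := (4 + INR k) ^ 2 + B).
   assert (X1 : 16 + B <= QQ) by (unfold QQ; nra).
   assert (X2 : (INR k + 3) * (INR k + 4) <= QQ) by (unfold QQ; nra).
   replace (QQ ^ 3) with (QQ ^ 2 * QQ) by ring.
   apply Rmult_le_compat. apply pow2_ge_0. nra. apply pow_incr; lra. auto. }
 unfold U. fold B. simpl INR in A0.
 replace (/ (1 + B)^3) with (/ (1^2 + B)^3) by (f_equal; ring).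
 replace (/ (4 + B)^3) with (/ ((1+1)^2 + B)^3) by (f_equal; ring).
 replace (/ (9 + B)^3) with (/ ((1+1+1)^2 + B)^3) by (f_equal; ring).
 replace (/ (3 * (16 + B)^2)) with (/ (16 + B)^2 / 3) by (field; lra).
 lra. Qed.

Lemma U_nonneg M : 0 < M -> 0 <= U M.
Proof. intros HM. unfold U.
 assert (0 < / (1 + 3*M/4)^3) by (apply Rinv_0_lt_compat, pow_lt; lra).
 assert (0 < / (4 + 3*M/4)^3) by (apply Rinv_0_lt_compat, pow_lt; lra).
 assert (0 < / (9 + 3*M/4)^3) by (apply Rinv_0_lt_compat, pow_lt; lra).
 assert (0 < / (3*(16 + 3*M/4)^2)) by (apply Rinv_0_lt_compat; apply Rmult_lt_0_compat; [lra| apply pow_lt; lra]).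
 assert (0 <= (4/(3*M))^3) by (apply pow_le; apply Rdiv_le_0_compat; lra).
 lra. Qed.

Definition Dc := (3/40 + 3*(17/32))*(64/27)/25 + 16*(17/32)/27.

Lemma U_tail M : 25 <= M -> U M <= Dc / M^2.
Proof. intros HM. unfold U, Dc. set (B := 3*M/4).
 assert (HB : 0 < B) by (unfold B; lra).
 assert (I1 : forall c, 0 <= c -> / (c + B)^3 <= / B^3).
 { intros c Hc. apply Rinv_le_contravar. apply pow_lt; auto. apply pow_incr; lra. }
 assert (I2 : / (3*(16 + B)^2) <= / (3 * B^2)).
 { apply Rinv_le_contravar. apply Rmult_lt_0_compat; [lra| apply pow_lt; lra].
   apply Rmult_le_compat_l. lra. apply pow_incr; lra. }
 assert (J1 := I1 1 ltac:(lra)). assert (J2 := I1 4 ltac:(lra)). assert (J3 := I1 9 ltac:(lra)).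
 assert (EB3 : / B^3 = (64/27) * (/M)^3) by (unfold B; field; lra).
 assert (EB2 : / (3 * B^2) = (16/27) * (/M)^2) by (unfold B; field; lra).
 assert (E4 : (4/(3*M))^3 = (64/27) * (/M)^3) by (field; lra).
 set (t := / M) in *.
 assert (Ht : 0 < t <= 1/25). { unfold t. split. apply Rinv_0_lt_compat; lra.
   replace (1/25) with (/25) by field. apply Rinv_le_contravar; lra. }
 assert (EM : Dc / M^2 = Dc * t^2) by (unfold t; field; lra). unfold Dc in EM. rewrite EM.
 rewrite E4. 
 assert (t^3 <= t^2 / 25) by (simpl; nra).
 assert (0 <= t^2) by apply pow2_ge_0.
 nra. Qed.

Definition V (k : nat) := U ((INR k + 1)^2).

Lemma V_series : ex_series V /\ Series V <= 305/1000.
Proof.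
 assert (Vt : forall k, 0 <= V (4 + k) <= Dc / 25 * (/ (INR k + 4) - / (INR k + 1 + 4))).
 { intros k. unfold V. rewrite plus_INR. replace (INR 4) with 4 by (simpl; ring).
   assert (0 <= INR k) by apply pos_INR. split. apply U_nonneg. apply pow_lt; lra.
   eapply Rle_trans. apply U_tail. simpl; nra.
   replace (Dc / 25 * (/ (INR k + 4) - / (INR k + 1 + 4))) with (Dc / (25 * ((INR k + 4) * (INR k + 5)))) by (field; lra).
   unfold Rdiv. apply Rmult_le_compat_l. unfold Dc; lra. apply Rinv_le_contravar. nra.
   replace (((4 + INR k + 1) ^ 2) ^ 2) with ((INR k + 5)^2 * (INR k + 5)^2) by ring.
   assert (25 <= (INR k + 5)^2) by (simpl; nra).
   assert ((INR k + 4) * (INR k + 5) <= (INR k + 5)^2) by (simpl; nra).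
   assert (0 <= (INR k + 4) * (INR k + 5)) by nra. apply Rmult_le_compat; lra. }
 assert (EX : ex_series V).
 { apply (ex_series_incr_n V 4). apply (ex_tele _ (Dc/25) 4). lra.
   intros k. rewrite Rabs_pos_eq by apply (Vt k). apply Vt. }
 split; auto.
 rewrite (Series_incr_n _ 4) by (auto; lia). simpl sum_f_R0.
 assert (T : Series (fun k => V (4 + k)) <= Dc / 25 / 4) by (apply Series_tele_le; [lra | exact Vt]).
 assert (V0 : V 0 <= 28307/100000) by (unfold V, U; simpl INR; lra).
 assert (V1 : V 1 <= 13426/1000000) by (unfold V, U; simpl INR; lra).
 assert (V2 : V 2 <= 2291/1000000) by (unfold V, U; simpl INR; lra).
 assert (V3 : V 3 <= 699/1000000) by (unfold V, U; simpl INR; lra).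
 unfold Dc in T. lra. Qed.

Lemma T2_0_nonneg x n y : 0 < y -> 0 <= T2 x 0 n y.
Proof. intros Hy. unfold T2. destruct (isz 0 n) eqn:E. lra.
 assert (HQ := Qpos x 0 n y E Hy).
 replace (Pf 0 y) with 0 by (unfold Pf; simpl; ring).
 assert (0 < / Qf x 0 n y ^ 3) by (apply Rinv_0_lt_compat, pow_lt; auto).
 unfold Rdiv. replace (y * (6 * / Qf x 0 n y ^ 3 - 42 * 0 * / Qf x 0 n y ^ 4 + 48 * 0 ^ 2 * / Qf x 0 n y ^ 5))
  with (6 * y * / Qf x 0 n y ^ 3) by ring.
 apply Rmult_le_pos; lra. Qed.

Lemma T2_0_1 x y : T2 x 0 1 y = 6 * y.
Proof. unfold T2, isz, Qf, Pf. simpl. field. Qed.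

Lemma T2_0_m1 x y : T2 x 0 (-1) y = 6 * y.
Proof. unfold T2, isz, Qf, Pf. simpl. field. Qed.

Lemma sqrt3_bound : 1732/1000 <= sqrt 3.
Proof. assert (H := sqrt_sqrt 3 ltac:(lra)). assert (H0 := sqrt_pos 3).
 destruct (Rle_dec (1732/1000) (sqrt 3)); auto. nra. Qed.

Lemma row_bound x m y : (m <> 0)%Z -> 0 < y -> 3/4 <= y^2 ->
  - 12 * y * U (IZR m ^ 2) <= Zsum (fun n => T2 x m n y).
Proof. intros Hm Hy Hy2. assert (A := row_phi x m y Hm Hy). assert (B := phi_U m y Hm Hy Hy2). lra. Qed.

Theorem d2_lower x y : sqrt 3 / 2 <= y -> 4 <= d2 x y.
Proof. intros Hy0. assert (S3 := sqrt3_bound).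
 assert (Hy : 866/1000 <= y) by lra.
 assert (Hy2 : 3/4 <= y^2).
 { assert (E := sqrt_sqrt 3 ltac:(lra)). assert (0 <= sqrt 3) by apply sqrt_pos. nra. }
 assert (Hyp : 0 < y) by lra.
 unfold d2. set (R := fun m => Zsum (fun n => T2 x m n y)).
 assert (ZR : Zex R).
 { apply (Zex_le _ (fun m => (96 * y * Kc x y * Zw) * w1 m)).
   2: apply Zex_scal, Zex_w1.
   intros m. unfold R. 
   replace (96 * y * Kc x y * Zw * w1 m) with (Zsum (fun n => (96 * y * Kc x y * w1 m) * w1 n)).
   apply Zsum_abs_le. intros n. rewrite Rmult_assoc. apply (bnd2 x m n y y). lra.
   apply Zex_scal, Zex_w1. rewrite Zsum_scal. unfold Zw. ring. }
 destruct ZR as [ZR1 ZR2].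
 assert (R0 : 12 * y <= R 0%Z).
 { unfold R. destruct (ZexT2 x 0 y Hyp) as [E1 E2]. unfold Zsum.
   assert (P1 : 6 * y <= Series (fun k => T2 x 0 (Z.of_nat k) y)).
   { rewrite Series_incr_1 by auto.
     assert (0 <= T2 x 0 (Z.of_nat 0) y) by (apply T2_0_nonneg; auto).
     assert (T2 x 0 (Z.of_nat 1) y <= Series (fun k => T2 x 0 (Z.of_nat (S k)) y)).
     { apply (Series_ge_first (fun k => T2 x 0 (Z.of_nat (S k)) y)).
       intros; apply T2_0_nonneg; auto. apply (ex_series_incr_1 (fun k => T2 x 0 (Z.of_nat k) y)); auto. }
     rewrite T2_0_1 in H0. lra. }
   assert (P2 : 6 * y <= Series (fun k => T2 x 0 (- Z.of_nat (S k)) y)).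
   { rewrite <- T2_0_m1 with (x := x). apply (Series_ge_first (fun k => T2 x 0 (- Z.of_nat (S k)) y)).
     intros; apply T2_0_nonneg; auto. auto. }
   lra. }
 destruct V_series as [EV SV].
 assert (EV' : ex_series (fun k => -12 * y * V k)) by (apply exR_scal; auto).
 assert (Pos : -12 * y * Series V <= Series (fun k => R (Z.of_nat (S k)))).
 { rewrite <- Series_scal_l. apply Series_le_gen; auto.
   apply (ex_series_incr_1 (fun k => R (Z.of_nat k))); auto.
   intros k. unfold V. replace ((INR k + 1)^2) with (IZR (Z.of_nat (S k)) ^ 2).
   apply row_bound; auto. lia. rewrite <- INR_IZR_INZ, S_INR. auto. }
 assert (Neg : -12 * y * Series V <= Series (fun k => R (- Z.of_nat (S k))%Z)).
 { rewrite <- Series_scal_l. apply Series_le_gen; auto.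
   intros k. unfold V. replace ((INR k + 1)^2) with (IZR (- Z.of_nat (S k)) ^ 2).
   apply row_bound; auto. lia. rewrite opp_IZR, <- INR_IZR_INZ, S_INR. ring. }
 unfold Zsum. rewrite Series_incr_1 by auto. change (Z.of_nat 0) with 0%Z.
 assert (0 <= Series V). { apply Series_ge_0. intros k. apply U_nonneg. generalize (pos_INR k); intros; apply pow_lt; lra. }
 assert (y * (12 - 24 * (305/1000)) <= y * (12 - 24 * Series V)) by (apply Rmult_le_compat_l; lra).
 nra. Qed.


Theorem lemma4p7 (x y : R) (hy : sqrt 3 / 2 <= y) :
  exists (d1 : R -> R) (d2 : R),
    (forall t : R, 0 < t -> is_derive (fun u : R => zeta 3 x u) t (d1 t)) /\
    is_derive d1 y d2 /\
    4 <= d2 /\ 0 < 4.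
Proof.
  assert (S3 := sqrt3_bound). assert (Hy : 0 < y) by lra.
  exists (d1 x), (d2 x y). split.
  - intros t Ht. apply deriv1; auto.
  - split. apply deriv2; auto. split. apply d2_lower; auto. lra.
Qed.
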